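(* Let $n \ge 1$ and $d \ge 1$ be integers and let $\Phi$ be a real $N \times d$ matrix satisfying the Restricted Isometry Condition with parameters $(2n, \varepsilon)$ for $\varepsilon = 0.03/\sqrt{\log n}$. Let $v \in \mathbb{R}^d$ be $n$-sparse, and let $x = \Phi v$. Then ROMP, run on input $x$ and sparsity level $n$, terminates in at most $n$ iterations and outputs a set $I \subset \{1,\dots,d\}$ such that $\mathrm{supp}(v) \subset I$ and $|I| \le 2n$.
   Context: A vector $v \in \mathbb{R}^d$ is $n$-sparse if $|\mathrm{supp}(v)| \le n$, where $\mathrm{supp}(v) = \{i : v_i \neq 0\}$. A matrix $\Phi$ satisfies the Restricted Isometry Condition (RIC) with parameters $(m,\varepsilon)$, $\varepsilon \in (0,1)$, if $(1-\varepsilon)\|w\|_2 \le \|\Phi w\|_2 \le (1+\varepsilon)\|w\|_2$ for all $m$-sparse $w \in \mathbb{R}^d$. For $I \subset \{1,\dots,d\}$, $\Phi_I$ denotes the submatrix of $\Phi$ formed by the columns indexed by $I$, and for a vector $y$, $y|_T$ denotes its restriction to the coordinates in $T$. The algorithm ROMP (Regularized Orthogonal Matching Pursuit), with input a measurement vector $x \in \mathbb{R}^N$ and sparsity level $n$, is: Initialize $I = \emptyset$ and residual $r = x$. Repeat the following until $r = 0$: (Identify) let $u = \Phi^* r$ and choose a set $J$ of the $n$ biggest coordinates of $u$ in magnitude, or all nonzero coordinates of $u$, whichever set is smaller; (Regularize) among all subsets $J_0 \subset J$ with comparable coordinates, i.e. $|u(i)| \le 2|u(j)|$ for all $i,j \in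 J_0$, choose one with maximal energy $\|u|_{J_0}\|_2$; (Update) set $I \leftarrow I \cup J_0$, $y = \operatorname{argmin}_{z \in \mathbb{R}^I} \|x - \Phi z\|_2$ (i.e. $z$ supported on $I$), and $r = x - \Phi y$. The output is the final set $I$. *)

(* Defs.v *)
From mathcomp Require Import all_boot all_order all_algebra.
From mathcomp Require Import all_classical all_reals all_analysis.
Set Implicit Arguments. Unset Strict Implicit. Unset Printing Implicit Defensive.
Import Order.TTheory GRing.Theory Num.Theory.
Local Open Scope ring_scope.

Section ROMP.
Variable R : realType.

Definition norm2 (m : nat) (w : 'cV[R]_m) : R :=
  Num.sqrt (\sum_(i < m) (w i 0) ^+ 2).

Definition supp (m : nat) (w : 'cV[R]_m) : {set 'I_m} :=
  [set i | w i 0 != 0].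

Definition sparse (m n : nat) (w : 'cV[R]_m) : Prop := (#|supp w| <= n)%N.

Definition RIC (N d : nat) (Phi : 'M[R]_(N, d)) (m : nat) (eps : R) : Prop :=
  0 < eps < 1 /\
  forall w : 'cV[R]_d, sparse m w ->
    (1 - eps) * norm2 w <= norm2 (Phi *m w) <= (1 + eps) * norm2 w.

Definition restrict (m : nat) (y : 'cV[R]_m) (T : {set 'I_m}) : 'cV[R]_m :=
  \col_i (if i \in T then y i 0 else 0).

Definition is_residual (N d : nat) (Phi : 'M[R]_(N, d)) (x : 'cV[R]_N)
    (I : {set 'I_d}) (r : 'cV[R]_N) : Prop :=
  exists y : 'cV[R]_d,
    supp y \subset I /\ r = x - Phi *m y /\
    forall z : 'cV[R]_d, supp z \subset I ->
      norm2 (x - Phi *m y) <= norm2 (x - Phi *m z).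

Definition identify (d n : nat) (u : 'cV[R]_d) (J : {set 'I_d}) : Prop :=
  if (#|supp u| <= n)%N then J = supp u
  else #|J| = n /\
       forall i j, i \in J -> j \notin J -> `|u j 0| <= `|u i 0|.

Definition comparable (d : nat) (u : 'cV[R]_d) (J0 : {set 'I_d}) : Prop :=
  forall i j, i \in J0 -> j \in J0 -> `|u i 0| <= 2 * `|u j 0|.

Definition regularize (d : nat) (u : 'cV[R]_d) (J J0 : {set 'I_d}) : Prop :=
  J0 \subset J /\ comparable u J0 /\
  forall J1 : {set 'I_d}, J1 \subset J -> comparable u J1 ->
    norm2 (restrict u J1) <= norm2 (restrict u J0).

Definition romp_step (N d : nat) (Phi : 'M[R]_(N, d)) (x : 'cV[R]_N) (n : nat)
    (I I' : {set 'I_d}) : Prop :=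
  exists r : 'cV[R]_N, is_residual Phi x I r /\ r != 0 /\
  exists J J0 : {set 'I_d},
    identify n (Phi^T *m r) J /\ regularize (Phi^T *m r) J J0 /\
    I' = I :|: J0.

(* Is 0, ..., Is k is a possible execution of k iterations of ROMP
   (for some admissible resolution of the choices in Identify/Regularize). *)
Definition romp_run (N d : nat) (Phi : 'M[R]_(N, d)) (x : 'cV[R]_N) (n : nat)
    (Is : nat -> {set 'I_d}) (k : nat) : Prop :=
  Is 0%N = finset.set0 /\ forall i, (i < k)%N -> romp_step Phi x n (Is i) (Is i.+1).

End ROMP.

(* Main.v *)
Require Import Defs.
From mathcomp Require Import all_boot all_order all_algebra.
From mathcomp Require Import all_classical all_reals all_analysis.
From mathcomp Require Import ring lra zify.
Import Order.TTheory GRing.Theory Num.Theory.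
Set Implicit Arguments. Unset Strict Implicit.
Local Open Scope ring_scope.

Section Aux.
Variable R : realType.

Definition sq m (w : 'cV[R]_m) := \sum_i w i 0 ^+ 2.
Definition dot m (a b : 'cV[R]_m) := \sum_i a i 0 * b i 0.
Definition En m (u : 'cV[R]_m) (A : {set 'I_m}) := \sum_(i in A) u i 0 ^+ 2.

Lemma sq_ge0 m (w : 'cV[R]_m) : 0 <= sq w.
Proof. by apply: sumr_ge0 => i _; rewrite sqr_ge0. Qed.

Lemma En_ge0 m (w : 'cV[R]_m) A : 0 <= En w A.
Proof. by apply: sumr_ge0 => i _; rewrite sqr_ge0. Qed.

Lemma sq_dot m (w : 'cV[R]_m) : sq w = dot w w.
Proof. by apply: eq_bigr => i _; rewrite expr2. Qed.

Lemma dotC m (a b : 'cV[R]_m) : dot a b = dot b a.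
Proof. by apply: eq_bigr => i _; rewrite mulrC. Qed.

Lemma dotDl m (a b c : 'cV[R]_m) : dot (a + b) c = dot a c + dot b c.
Proof. by rewrite /dot -big_split; apply: eq_bigr => i _; rewrite mxE mulrDl. Qed.

Lemma dotNl m (a c : 'cV[R]_m) : dot (- a) c = - dot a c.
Proof. by rewrite /dot -sumrN; apply: eq_bigr => i _; rewrite mxE mulNr. Qed.

Lemma dotZl m k (a c : 'cV[R]_m) : dot (k *: a) c = k * dot a c.
Proof. by rewrite /dot mulr_sumr; apply: eq_bigr => i _; rewrite mxE mulrA. Qed.

Lemma dot_mul N d (Phi : 'M[R]_(N, d)) a b :
  dot (Phi *m a) b = dot a (Phi^T *m b).
Proof.
rewrite /dot.
under eq_bigr do rewrite !mxE big_distrl /=.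
rewrite exchange_big /=; apply: eq_bigr => j _.
rewrite !mxE big_distrr /=; apply: eq_bigr => i _.
by rewrite !mxE; ring.
Qed.

Lemma sqD m (a b : 'cV[R]_m) : sq (a + b) = sq a + 2 * dot a b + sq b.
Proof. rewrite !sq_dot !dotDl (dotC b (a + b)) (dotC a (a + b)) !dotDl (dotC b a); ring. Qed.

Lemma sqB m (a b : 'cV[R]_m) : sq (a - b) = sq a - 2 * dot a b + sq b.
Proof. rewrite sqD (dotC a) dotNl !sq_dot dotNl (dotC b (- b)) dotNl (dotC b a); ring. Qed.

Lemma sqZ m k (a : 'cV[R]_m) : sq (k *: a) = k ^+ 2 * sq a.
Proof. rewrite !sq_dot dotZl (dotC a (k *: a)) dotZl expr2; ring. Qed.

Lemma suppD m (a b : 'cV[R]_m) : supp (a + b) \subset supp a :|: supp b.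
Proof.
apply/fintype.subsetP => i; rewrite !inE mxE.
move=> H; case: (eqVneq (a i 0) 0) => [ha|ha]; last by [].
by move: H; rewrite ha add0r => ->.
Qed.

Lemma suppN m (a : 'cV[R]_m) : supp (- a) = supp a.
Proof. by apply/setP => i; rewrite !inE mxE oppr_eq0. Qed.

Lemma suppZ m k (a : 'cV[R]_m) : supp (k *: a) \subset supp a.
Proof.
apply/fintype.subsetP => i; rewrite !inE mxE.
by apply: contra => /eqP ->; rewrite mulr0.
Qed.

Lemma suppB m (a b : 'cV[R]_m) : supp (a - b) \subset supp a :|: supp b.
Proof. by rewrite -(suppN b) suppD. Qed.

Lemma RIC_sq N d (Phi : 'M[R]_(N, d)) m eps : RIC Phi m eps ->
  forall w, (#|supp w| <= m)%N ->
  (1 - eps) ^+ 2 * sq w <= sq (Phi *m w) /\ sq (Phi *m w) <= (1 + eps) ^+ 2 * sq w.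
Proof.
move=> [/andP [e0 e1] H] w /H /andP [H1 H2]; move: H1 H2.
rewrite /norm2 -/(sq w) -/(sq (Phi *m w)) => H1 H2.
have e0' : 0 <= 1 - eps by lra.
have e1' : 0 <= 1 + eps by lra.
split.
  by rewrite -ler_sqrt ?sq_ge0 // sqrtrM ?sqr_ge0 // sqrtr_sqr ger0_norm.
by rewrite -ler_sqrt ?mulr_ge0 ?sqr_ge0 ?sq_ge0 // sqrtrM ?sqr_ge0 // sqrtr_sqr ger0_norm.
Qed.

Lemma dot_disj m (a b : 'cV[R]_m) (A B : {set 'I_m}) : supp a \subset A -> supp b \subset B ->
  A :&: B = finset.set0 -> dot a b = 0.
Proof.
move=> sa sb AB; apply: big1 => i _.
case: (eqVneq (a i 0) 0) => [->|ha]; first by rewrite mul0r.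
case: (eqVneq (b i 0) 0) => [->|hb]; first by rewrite mulr0.
have : i \in A :&: B.
  by rewrite inE (fintype.subsetP sa) ?(fintype.subsetP sb) ?inE.
by rewrite AB inE.
Qed.

Lemma card_supp_le m (a b : 'cV[R]_m) (A B : {set 'I_m}) k : supp a \subset A -> supp b \subset B ->
  (#|A :|: B| <= k)%N -> (#|supp (a + b)| <= k)%N /\ (#|supp (a - b)| <= k)%N.
Proof.
move=> sa sb hk; split; apply: leq_trans hk; apply: subset_leq_card.
  exact: fintype.subset_trans (suppD a b) (finset.setUSS sa sb).
exact: fintype.subset_trans (suppB a b) (finset.setUSS sa sb).
Qed.

Lemma near_orth N d (Phi : 'M[R]_(N, d)) m eps a b (A B : {set 'I_d}) : RIC Phi m eps ->
  supp a \subset A -> supp b \subset B -> A :&: B = finset.set0 -> (#|A :|: B| <= m)%N ->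
  dot (Phi *m a) (Phi *m b) <= eps * (sq a + sq b).
Proof.
move=> HR sa sb AB hk.
have d0 := dot_disj sa sb AB.
have [hp hm] := card_supp_le sa sb hk.
have [_ Hp] := RIC_sq HR hp; have [Hm _] := RIC_sq HR hm.
move: Hp Hm; rewrite mulmxDr mulmxBr !sqB !sqD d0 => Hp Hm.
have e0 : 0 < eps by case: HR => /andP[].
set P := sq a + sq b.
have hP : ((1 + eps) ^+ 2 - (1 - eps) ^+ 2) * (sq a + 2 * 0 + sq b) = 4 * eps * P
  by rewrite /P; ring.
lra.
Qed.

Lemma dot_delta m (i : 'I_m) (w : 'cV[R]_m) : dot (delta_mx i 0) w = w i 0.
Proof.
rewrite /dot (bigD1 i) //= big1 ?addr0; first by rewrite mxE !eqxx mul1r.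
move=> j ji; rewrite mxE; case: (eqVneq i j) => [e|_]; last by rewrite mul0r.
by rewrite e eqxx in ji.
Qed.

Lemma supp_delta m (i : 'I_m) : supp (delta_mx i 0 : 'cV[R]_m) \subset [set i].
Proof.
apply/fintype.subsetP => j; rewrite !inE mxE.
by case: (j == i) => //=; rewrite eqxx.
Qed.

Lemma resid_orth N d (Phi : 'M[R]_(N, d)) x I r : is_residual Phi x I r ->
  forall i, i \in I -> (Phi^T *m r) i 0 = 0.
Proof.
case=> y [sy [-> Hmin]] i iI.
set g := (Phi^T *m (x - Phi *m y)) i 0.
set e := (delta_mx i 0 : 'cV[R]_d).
set c := sq (Phi *m e).
have c0 : 0 <= c by apply: sq_ge0.
set t := g / (c + 1).
have sz : supp (y + t *: e) \subset I.
  apply: fintype.subset_trans (suppD _ _) _; rewrite finset.subUset sy /=.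
  apply: fintype.subset_trans (suppZ _ _) _; apply: fintype.subset_trans (supp_delta i) _.
  by rewrite finset.sub1set.
have := Hmin _ sz; rewrite /norm2 ler_sqrt ?sq_ge0 // -/(sq _) -/(sq _).
rewrite mulmxDr opprD addrA -scalemxAr (sqB (x - Phi *m y)) sqZ (dotC _ (t *: _)) dotZl dot_mul.
rewrite dot_delta -/g -/c => H.
have tg : g = t * (c + 1) by rewrite /t mulfVK // lt0r_neq0 // ltr_pwDr.
have : t = 0 by nra.
by rewrite tg => ->; rewrite mul0r.
Qed.

Lemma sqr_le (a b c : R) : `|a| <= c * `|b| -> 0 <= c -> a ^+ 2 <= c ^+ 2 * b ^+ 2.
Proof.
move=> h c0; rewrite -(real_normK (num_real a)) -(real_normK (num_real b)).
have ha := normr_ge0 a; have hb := normr_ge0 b.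
nra.
Qed.

Lemma En_sub m (u : 'cV[R]_m) (A B : {set 'I_m}) : A \subset B -> En u A <= En u B.
Proof.
move=> AB; rewrite /En [X in _ <= X](big_setID A) /= (finset.setIidPr AB).
by rewrite lerDl sumr_ge0 // => i _; rewrite sqr_ge0.
Qed.

Lemma En_split m (u : 'cV[R]_m) (A B : {set 'I_m}) : En u A = En u (A :&: B) + En u (A :\: B).
Proof. exact: big_setID. Qed.

Lemma En0 m (u : 'cV[R]_m) : En u finset.set0 = 0.
Proof. by rewrite /En big_set0. Qed.

Lemma dsum m (X Y : {set 'I_m}) (f g : 'I_m -> R) c :
  (forall i j, i \in X -> j \in Y -> f i <= c * g j) ->
  #|Y|%:R * (\sum_(i in X) f i) <= c * (#|X|%:R * \sum_(j in Y) g j).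
Proof.
move=> H.
rewrite !mulr_natl -!sumr_const exchange_big /= mulr_sumr.
apply: ler_sum => i iX; rewrite mulr_sumr; apply: ler_sum => j jY.
exact: H.
Qed.

Lemma identify_prop d n (u : 'cV[R]_d) J : identify n u J ->
  [/\ (#|J| <= n)%N, J \subset supp u &
      forall B : {set 'I_d}, (#|B| <= n)%N -> En u B <= En u J].
Proof.
rewrite /identify; case: ifP => hs.
  move=> ->; split => // B _.
  rewrite (En_split u B (supp u)).
  have -> : En u (B :\: supp u) = 0.
    apply: big1 => i; rewrite !inE negbK => /andP [/eqP -> _].
    by rewrite expr0n.
  by rewrite addr0; apply: En_sub; apply: subsetIr.
move=> [cJ top].
have Js : J \subset supp u.
  apply/fintype.subsetP => i iJ; rewrite inE; apply/negP => /eqP ui0.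
  have : ~~ (supp u \subset J).
    apply/negP => /subset_leq_card; rewrite cJ hs; done.
  case/subsetPn => j js jJ.
  have := top i j iJ jJ; rewrite ui0 normr0 normr_le0.
  by move: js; rewrite inE => /negbTE ->.
split => //; first by rewrite cJ.
move=> B cB.
rewrite (En_split u B J) (En_split u J B) finset.setIC lerD2l.
have cc : (#|B :\: J| <= #|J :\: B|)%N.
  have := cardsID J B; have := cardsID B J; rewrite finset.setIC; lia.
have H : #|J :\: B|%:R * En u (B :\: J) <= 1 * (#|B :\: J|%:R * En u (J :\: B)).
  apply: dsum => i j; rewrite !inE => /andP [iJ iB] /andP [jB jJ].
  rewrite mul1r -(real_normK (num_real (u i 0))) -(real_normK (num_real (u j 0))).
  by rewrite ler_sqr ?nnegrE ?normr_ge0 // top.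
case: (posnP #|J :\: B|) => [c0|cp].
  move: cc; rewrite c0 leqn0 cards_eq0 => /eqP ->.
  by rewrite En0 En_ge0.
rewrite mul1r in H.
have H2 : #|B :\: J|%:R * En u (J :\: B) <= #|J :\: B|%:R * En u (J :\: B).
  by rewrite ler_wpM2r ?En_ge0 // ler_nat.
have := le_trans H H2.
by rewrite ler_pM2l // ltr0n.
Qed.

Lemma sq_restrict m (u : 'cV[R]_m) (A : {set 'I_m}) : sq (Defs.restrict u A) = En u A.
Proof.
rewrite /sq /En [RHS]big_mkcond /=; apply: eq_bigr => i _; rewrite mxE.
by case: (i \in A) => //; rewrite expr0n.
Qed.

Lemma cover_aux (a M : R) : 0 <= a -> a <= M -> forall L, exists k,
  (k <= L)%N /\ 2 ^+ k * a <= M /\ (k = L \/ M < 2 ^+ k.+1 * a).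
Proof.
move=> a0 aM; elim=> [|L [k [kL [h1 h2]]]].
  by exists 0%N; split => //; split; [rewrite expr0 mul1r | left].
case: (lerP (2 ^+ L.+1 * a) M) => h.
  by exists L.+1; split => //; split => //; left.
exists k; split; first exact: leqW.
split => //; right; case: h2 => [e|//]; by rewrite e.
Qed.

Lemma reg_bound d n (u : 'cV[R]_d) (J J0 : {set 'I_d}) L :
  (#|J| <= n)%N -> (0 < L)%N -> (4 * n <= 4 ^ L)%N -> regularize u J J0 ->
  3 * En u J <= 4 * L%:R * En u J0.
Proof.
move=> cJ L0 hL [sJ0 [_ max0]].
have maxE : forall J1 : {set 'I_d}, J1 \subset J -> Defs.comparable u J1 -> En u J1 <= En u J0.
  move=> J1 s1 c1; have := max0 J1 s1 c1.
  by rewrite /norm2 -/(sq _) -/(sq _) !sq_restrict ler_sqrt ?En_ge0.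
case: (set_0Vmem J) => [->|[i0 i0J]].
  by rewrite En0 mulr0 mulr_ge0 ?En_ge0 // mulr_ge0 // ler0n.
pose i1 := [arg max_(i > i0 in J) `|u i 0|]%O.
have [i1J max1] : i1 \in J /\ (forall j, j \in J -> `|u j 0| <= `|u i1 0|).
  by rewrite /i1; case: arg_maxP => // i iJ H; split => // j /H.
set M := `|u i1 0|.
pose cls (k : nat) := [set i in J | (2 ^+ k * `|u i 0| <= M) &&
                                    ((k == L) || (M < 2 ^+ k.+1 * `|u i 0|))].
have cover : En u J <= \sum_(k < L.+1) En u (cls k).
  rewrite /En.
  apply: (@le_trans _ _ (\sum_(i in J) \sum_(k < L.+1)
            (if i \in cls k then u i 0 ^+ 2 else 0))).
    apply: ler_sum => i iJ.
    have [k [kL [h1 h2]]] := cover_aux (normr_ge0 (u i 0)) (max1 i iJ) L.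
    have kL' : (k < L.+1)%N by [].
    rewrite (bigD1 (Ordinal kL')) //= ifT.
      by rewrite lerDl sumr_ge0 // => ? _; case: ifP; rewrite // sqr_ge0.
    rewrite inE iJ h1 /=; case: h2 => [->|->]; by rewrite ?eqxx ?orbT.
  rewrite exchange_big /=; apply: ler_sum => k _.
  rewrite [X in _ <= X]big_mkcond [X in X <= _]big_mkcond /=.
  apply: ler_sum => i _; rewrite inE; case: (i \in J) => //=.
rewrite big_ord_recr /= in cover.
have hk : forall k : 'I_L, En u (cls (widen_ord (leqnSn L) k)) <= En u J0.
  move=> k; apply: maxE.
    by apply/fintype.subsetP => i; rewrite inE => /andP[].
  move=> i j; rewrite !inE /= => /andP [_ /andP [hi1 hi2]] /andP [_ /andP [hj1 hj2]].
  have kL : (k != L :> nat) by rewrite neq_ltn ltn_ord.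
  rewrite (negbTE kL) /= in hi2 hj2.
  have p0 : 0 < 2 ^+ k :> R by rewrite exprn_gt0.
  rewrite exprS in hi2 hj2.
  have := normr_ge0 (u i 0); have := normr_ge0 (u j 0).
  nra.
have sum1 : \sum_(k < L) En u (cls (widen_ord (leqnSn L) k)) <= L%:R * En u J0.
  apply: le_trans (ler_sum _ (fun k _ => hk k)) _.
  by rewrite sumr_const card_ord mulr_natl.
have n0 : (0 < n)%N.
  apply: leq_trans cJ; rewrite card_gt0; apply/set0Pn; by exists i0.
have lastb : 4 * En u (cls L) <= M ^+ 2.
  have each : forall i, i \in cls L -> (2 ^+ L) ^+ 2 * u i 0 ^+ 2 <= M ^+ 2.
    move=> i; rewrite inE => /andP [_ /andP [h _]].
    rewrite -(real_normK (num_real (u i 0))) -exprMn.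
    by rewrite ler_sqr ?nnegrE ?mulr_ge0 ?exprn_ge0 ?normr_ge0.
  have H1 : (2 ^+ L) ^+ 2 * En u (cls L) <= #|cls L|%:R * M ^+ 2.
    rewrite /En mulr_sumr; apply: le_trans (ler_sum _ (fun i h => each i h)) _.
    by rewrite sumr_const mulr_natl.
  have c1 : (#|cls L| <= n)%N.
    apply: leq_trans cJ; apply: subset_leq_card.
    by apply/fintype.subsetP => i; rewrite inE => /andP[].
  have hP : (4 * n)%:R <= (2 ^+ L) ^+ 2 :> R.
    rewrite -natrX -natrX ler_nat.
    have -> : ((2 ^ L) ^ 2 = 4 ^ L)%N by rewrite -expnM mulnC expnM.
    exact: hL.
  rewrite natrM in hP.
  have c1' : #|cls L|%:R <= n%:R :> R by rewrite ler_nat.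
  have n0' : 0 < n%:R :> R by rewrite ltr0n.
  have E0 := En_ge0 u (cls L).
  have M0 : 0 <= M ^+ 2 by rewrite sqr_ge0.
  nra.
have Mb : M ^+ 2 <= En u J.
  rewrite /En (bigD1 i1) //= /M (real_normK (num_real _)) lerDl.
  by rewrite sumr_ge0 // => ? _; rewrite sqr_ge0.
lra.
Qed.

Lemma supp_restrict m (x : 'cV[R]_m) (T : {set 'I_m}) : supp (Defs.restrict x T) \subset T.
Proof.
apply/fintype.subsetP => i; rewrite inE mxE; case: (i \in T) => //.
by rewrite eqxx.
Qed.

Lemma sq_eq0 m (w : 'cV[R]_m) : sq w = 0 -> w = 0.
Proof.
move=> h; apply/matrixP => i j; rewrite (ord1 j) mxE.
have := psumr_eq0P (fun i _ => sqr_ge0 (w i 0)) h (erefl true) (i := i).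
by move/eqP; rewrite sqrf_eq0 => /eqP.
Qed.

Lemma dot_restrict m (u : 'cV[R]_m) (A : {set 'I_m}) : dot (Defs.restrict u A) u = En u A.
Proof.
rewrite /dot /En [RHS]big_mkcond /=; apply: eq_bigr => i _; rewrite mxE.
by case: (i \in A); rewrite ?expr2 ?mul0r.
Qed.

Lemma card_U_le m (A B : {set 'I_m}) : (#|A :|: B| <= #|A| + #|B|)%N.
Proof. have := cardsUI A B; lia. Qed.

Lemma step_lemma N d n (Phi : 'M[R]_(N, d)) eps lam L (v : 'cV[R]_d) (I I' : {set 'I_d}) :
  RIC Phi (2 * n) eps -> 0 < lam -> (0 < L)%N -> (4 * n <= 4 ^ L)%N ->
  L%:R <= 4 * lam -> 1024 * eps ^+ 2 * lam <= 3 * (1 - eps) ^+ 4 ->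
  (#|supp v| <= n)%N -> (#|I :\: supp v| <= #|I :&: supp v|)%N ->
  romp_step Phi (Phi *m v) n I I' ->
  exists J0 : {set 'I_d}, [/\ I' = I :|: J0, J0 :&: I = finset.set0,
     (0 < #|J0 :&: supp v|)%N & (#|J0 :\: supp v| <= #|J0 :&: supp v|)%N].
Proof.
move=> HR lam0 L0 hL hLl hpar cS cI [r [hr [r0 [J [J0 [hid [hreg ->]]]]]]].
exists J0.
have [e0 e1] : 0 < eps /\ eps < 1 by case: HR => /andP[].
set S := supp v in cS cI *.
set u := Phi^T *m r in hid hreg *.
have orth := resid_orth hr; rewrite -/u in orth.
have [cJ Jsupp Jmax] := identify_prop hid.
case: (hreg) => sJ0 [cmp0 _].
have J0I : J0 :&: I = finset.set0.
  apply/setP => i; rewrite !inE; apply/negbTE/negP => /andP [iJ0 iI].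
  have := fintype.subsetP Jsupp i (fintype.subsetP sJ0 i iJ0).
  by rewrite inE (orth i iI) eqxx.
case: hr => y [sy [rdef _]].
set x := v - y.
have rx : r = Phi *m x by rewrite rdef /x mulmxBr.
have ux : u = Phi^T *m (Phi *m x) by rewrite /u rx.
have sx : supp x \subset S :|: I :=
  fintype.subset_trans (suppB v y) (finset.setUSS (subxx _) sy).
have cIS : (#|I :&: S| <= n)%N := leq_trans (subset_leq_card (subsetIr I S)) cS.
have cSI : (#|S :|: I| <= 2 * n)%N.
  have e1' := cardsUI S I; have e2' := cardsID S I.
  rewrite (finset.setIC S I) in e1'; lia.
have X0 : 0 < sq x.
  rewrite lt_def sq_ge0 andbT; apply/eqP => /sq_eq0 x0.
  by move/eqP: r0; apply; rewrite rx x0 mulmx0.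
have [Hlow _] := RIC_sq HR (leq_trans (subset_leq_card sx) cSI).
have dxu : sq (Phi *m x) = dot x u by rewrite sq_dot dot_mul ux.
set B := S :\: I.
have dB : dot x u = \sum_(i in B) x i 0 * u i 0.
  rewrite /dot [RHS]big_mkcond /=; apply: eq_bigr => i _.
  rewrite inE; case: (boolP (i \in I)) => iI /=; first by rewrite orth // mulr0.
  case: (boolP (i \in S)) => iS //=.
  have : i \notin supp x.
    apply/negP => /(fintype.subsetP sx); by rewrite inE (negbTE iS) (negbTE iI).
  by rewrite inE negbK => /eqP ->; rewrite mul0r.
set s := (1 - eps) ^+ 2.
have s0 : 0 < s by rewrite exprn_gt0 // subr_gt0.
have amgm : 2 * s * (\sum_(i in B) x i 0 * u i 0) <=
            s ^+ 2 * (\sum_(i in B) x i 0 ^+ 2) + En u B.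
  rewrite /En !mulr_sumr -big_split /=; apply: ler_sum => i _.
  have := sqr_ge0 (s * x i 0 - u i 0); nra.
have xB : \sum_(i in B) x i 0 ^+ 2 <= sq x.
  rewrite /sq [X in _ <= X](bigID (fun i => i \in B)) /= lerDl.
  by rewrite sumr_ge0 // => ? _; rewrite sqr_ge0.
have lowB : s ^+ 2 * sq x <= En u B.
  rewrite dxu dB -/s in Hlow.
  have h := ler_wpM2l (ltW (mulr_gt0 (ltr0Sn _ 1) s0)) Hlow.
  have h' := ler_wpM2l (ltW (exprn_gt0 2 s0)) xB.
  have hh : 2 * s * (s * sq x) = 2 * (s ^+ 2 * sq x) by ring.
  lra.
have cB : (#|B| <= n)%N := leq_trans (subset_leq_card (subsetDl S I)) cS.
have lowJ : s ^+ 2 * sq x <= En u J := le_trans lowB (Jmax B cB).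
have rb := reg_bound cJ L0 hL hreg.
set A := J0 :\: S.
set W := En u A.
have AS : A :&: S = finset.set0.
  by apply/setP => i; rewrite /A !inE; case: (v i 0 != 0); rewrite /= ?andbF.
have AI : A :&: (I :\: S) = finset.set0.
  apply/setP => i; rewrite /A !inE; apply/negbTE/negP => /andP [/andP [_ iJ0] /andP [_ iI]].
  by have : i \in J0 :&: I; [rewrite inE iJ0 iI | rewrite J0I inE].
have cA : (#|A| <= n)%N.
  apply: leq_trans cJ; apply: subset_leq_card.
  exact: fintype.subset_trans (subsetDl J0 S) sJ0.
have cIS' : (#|I :\: S| <= n)%N := leq_trans cI cIS.
set xS := Defs.restrict x S; set xR := Defs.restrict x (I :\: S).
have xsplit : x = xS + xR.
  apply/matrixP => i j; rewrite (ord1 j) !mxE.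
  case: (boolP (i \in S)) => iS; first by rewrite inE iS /= addr0.
  rewrite inE iS /= add0r; case: (boolP (i \in I)) => iI //=.
  have : i \notin supp x.
    apply/negP => /(fintype.subsetP sx); by rewrite inE (negbTE iS) (negbTE iI).
  by rewrite inE negbK /x !mxE => /eqP.
have sxS : supp xS \subset S by apply: supp_restrict.
have sxR : supp xR \subset I :\: S by apply: supp_restrict.
have SIS : S :&: (I :\: S) = finset.set0.
  by apply/setP => i; rewrite !inE; case: (v i 0 != 0); rewrite /= ?andbF.
have sqx : sq x = sq xS + sq xR.
  by rewrite {1}xsplit sqD (dot_disj sxS sxR SIS) mulr0 addr0.
set t := (4 * eps)^-1.
have t0 : 0 < t by rewrite invr_gt0 mulr_gt0.
have te : t * eps = 1 / 4.
  by rewrite /t invfM -mulrA mulVf ?lt0r_neq0 // mulr1 div1r.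
set a := t *: Defs.restrict u A.
have sa : supp a \subset A :=
  fintype.subset_trans (suppZ _ _) (supp_restrict u A).
have hAS : (#|A :|: S| <= 2 * n)%N.
  by apply: leq_trans (card_U_le A S) _; rewrite mul2n -addnn leq_add.
have hAR : (#|A :|: (I :\: S)| <= 2 * n)%N.
  by apply: leq_trans (card_U_le A (I :\: S)) _; rewrite mul2n -addnn leq_add.
have h1 := near_orth HR sa sxS AS hAS.
have h2 := near_orth HR sa sxR AI hAR.
have key : dot (Phi *m a) (Phi *m x) = t * W.
  by rewrite /a -scalemxAr dotZl dot_mul -ux dot_restrict.
have split2 : dot (Phi *m a) (Phi *m x) =
    dot (Phi *m a) (Phi *m xS) + dot (Phi *m a) (Phi *m xR).
  have -> : Phi *m x = Phi *m xS + Phi *m xR by rewrite {1}xsplit mulmxDr.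
  by rewrite dotC dotDl !(dotC (Phi *m a)).
have sqa : sq a = t ^+ 2 * W by rewrite sqZ sq_restrict.
have W0 : 0 <= W := En_ge0 u A.
have Wb : W <= 8 * eps ^+ 2 * sq x.
  have h3 : t * W <= eps * (2 * t ^+ 2 * W + sq x).
    rewrite -key split2 sqx; rewrite sqa in h1 h2; lra.
  have h4 := ler_wpM2l (ltW (mulr_gt0 (ltr0Sn _ 3) e0)) h3.
  have : 4 * eps * (t * W) = W.
    have -> : 4 * eps * (t * W) = 4 * (t * eps) * W by ring.
    by rewrite te; lra.
  have : 4 * eps * (eps * (2 * t ^+ 2 * W + sq x)) = W / 2 + 4 * eps ^+ 2 * sq x.
    have -> : 4 * eps * (eps * (2 * t ^+ 2 * W + sq x)) =
       8 * (t * eps) ^+ 2 * W + 4 * eps ^+ 2 * sq x by ring.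
    by rewrite te; lra.
  lra.
set E0 := En u J0 in rb *.
have E00 : 0 <= E0 := En_ge0 u J0.
have q0 : 0 < (1 - eps) ^+ 4 by rewrite exprn_gt0 // subr_gt0.
have s2 : s ^+ 2 = (1 - eps) ^+ 4 by rewrite /s -exprM.
rewrite s2 in lowJ.
have hLE : 4 * L%:R * E0 <= 16 * lam * E0.
  have := ler_wpM2r E00 hLl; lra.
have hX := ler_wpM2r (ltW X0) hpar.
have E0pos : 0 < E0.
  have h8 : 0 < 3 * ((1 - eps) ^+ 4 * sq x) by rewrite mulr_gt0 // mulr_gt0.
  have h7 : 0 < lam * E0 by lra.
  by rewrite pmulr_rgt0 in h7.
have hW : 8 * W <= E0.
  have h5 : 16 * lam * (64 * eps ^+ 2 * sq x) <= 16 * lam * E0.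
    have -> : 16 * lam * (64 * eps ^+ 2 * sq x) = 1024 * eps ^+ 2 * lam * sq x by ring.
    have : 3 * (1 - eps) ^+ 4 * sq x <= 3 * En u J.
      by rewrite -mulrA ler_pM2l.
    lra.
  have : 64 * eps ^+ 2 * sq x <= E0.
    by move: h5; rewrite ler_pM2l // mulr_gt0.
  lra.
have cnt := @dsum _ J0 A (fun i => u i 0 ^+ 2) (fun i => u i 0 ^+ 2) (2 ^+ 2)
  (fun i j iJ0 jA => sqr_le (cmp0 i j iJ0 (fintype.subsetP (subsetDl J0 S) j jA))
                            (ler0n _ 2)).
rewrite -/(En u J0) -/E0 -/(En u A) -/W in cnt.
have c2 : (2 * #|A|)%:R <= #|J0|%:R :> R.
  rewrite natrM.
  have e4 : (2:R) ^+ 2 = 4 by rewrite expr2; lra.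
  rewrite e4 in cnt.
  have h6 : #|A|%:R * E0 <= #|J0|%:R * E0 / 2.
    have hj := ler0n R #|J0|.
    have h9 : #|J0|%:R * (8 * W) <= #|J0|%:R * E0 by rewrite ler_wpM2l.
    move: cnt h9; set cJ0 := #|J0|%:R; set cA' := #|A|%:R => cnt h9.
    lra.
  have : #|A|%:R * 2 * E0 <= #|J0|%:R * E0.
    have : #|A|%:R * E0 * 2 <= #|J0|%:R * E0 / 2 * 2 by rewrite ler_wpM2r.
    by rewrite mulrAC divfK.
  by rewrite ler_pM2r // mulrC.
rewrite ler_nat in c2.
have cd := cardsID S J0.
have J0n : (0 < #|J0|)%N.
  rewrite card_gt0; apply/negP => /eqP J0e.
  by move: E0pos; rewrite /E0 J0e En0 ltxx.
have fin : forall a0 b0 c0 : nat, (2 * a0 <= c0)%N -> (b0 + a0 = c0)%N -> (0 < c0)%N ->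
  (0 < b0)%N /\ (a0 <= b0)%N by move=> a0 b0 c0; clear; lia.
have [f1 f2] := fin _ _ _ c2 cd J0n.
by split.
Qed.
End Aux.

Lemma params (R : realType) n (eps : R) : (1 <= n)%N ->
  eps = (3%:R / 100%:R) / Num.sqrt (ln (n%:R : R)) -> 0 < eps ->
  exists (lam : R) (L : nat), [/\ 0 < lam, (0 < L)%N, (4 * n <= 4 ^ L)%N,
     L%:R <= 4 * lam & 1024 * eps ^+ 2 * lam <= 3 * (1 - eps) ^+ 4].
Proof.
move=> n1 epsE e0.
set lam := ln (n%:R : R).
have lam0 : 0 < lam.
  rewrite -sqrtr_gt0; case: (lerP (Num.sqrt lam) 0) => h //.
  have h0 : Num.sqrt lam = 0 by apply/eqP; rewrite eq_le h sqrtr_ge0.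
  by move: e0; rewrite epsE -/lam h0 invr0 mulr0 ltxx.
have epsl : eps ^+ 2 * lam = 9 / 10000.
  rewrite epsE -/lam expr_div_n sqr_sqrtr ?(ltW lam0) // mulfVK ?lt0r_neq0 //.
  by field.
have n2 : (2 <= n)%N.
  move: n1; rewrite leq_eqVlt => /orP [/eqP n1e|//].
  by move: lam0; rewrite /lam -n1e ln1 ltxx.
have ln2 : 1 / 2 <= ln (2 : R).
  have h := @le_ln1Dx R (- (1 / 2)) ltac:(lra).
  have e2 : (1 + - (1 / 2) : R) = 2^-1 by field.
  rewrite e2 lnV ?posrE // in h; lra.
have lam2 : ln (2 : R) <= lam.
  by rewrite /lam ler_ln ?posrE ?ltr0n // (ler_nat R 2 n).
set t := trunc_log 2 n.
have tn : (2 ^ t <= n)%N := trunc_logP (isT : (1 < 2)%N) n1.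
have nt : (n < 2 ^ t.+1)%N := trunc_log_ltn n (isT : (1 < 2)%N).
exists lam, t.+1; split => //.
- have -> : (4 ^ t.+1 = 2 ^ t.+1 * 2 ^ t.+1)%N by rewrite -expnMn.
  have h1 := leq_mul nt nt; move: h1; set P := (2 ^ t.+1)%N; clear; nia.
- have ht : t%:R * ln (2 : R) <= lam.
    have : ln ((2 ^ t)%:R : R) <= lam.
      by rewrite /lam ler_ln ?posrE ?ltr0n ?expn_gt0 // ler_nat.
    by rewrite natrX lnXn // mulr_natl.
  have t0 : 0 <= t%:R :> R by apply: ler0n.
  rewrite -addn1 natrD.
  have hh2 : 0 <= t%:R * (ln (2:R) - 1 / 2) by apply: mulr_ge0 => //; lra.
  lra.
- have e2 : eps ^+ 2 <= 9 / 5000.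
    have hh : 0 <= eps ^+ 2 * (lam - 1 / 2) by apply: mulr_ge0; [apply: sqr_ge0 | lra].
    lra.
  have e4 : eps <= 1 / 4.
    move: e2 e0; clear; move=> e2 e0; nra.
  have q : 9 / 16 <= (1 - eps) ^+ 2.
    move: e4 e0; clear; move=> e4 e0; nra.
  have q2 : 81 / 256 <= (1 - eps) ^+ 4.
    have -> : (1 - eps) ^+ 4 = ((1 - eps) ^+ 2) ^+ 2 by rewrite -exprM.
    move: q; set z := (1 - eps) ^+ 2; clear; move=> q; nra.
  have -> : 1024 * eps ^+ 2 * lam = 1024 * (eps ^+ 2 * lam) by ring.
  rewrite epsl; lra.
Qed.

Theorem theorem1p3 (R : realType) (N d n : nat) :
  (1 <= n)%N -> (1 <= d)%N ->
  forall Phi : 'M[R]_(N, d),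
  RIC Phi (2 * n) ((3%:R / 100%:R) / Num.sqrt (ln (n%:R : R))) ->
  forall v : 'cV[R]_d, sparse n v ->
  (forall (Is : nat -> {set 'I_d}) (k : nat),
      romp_run Phi (Phi *m v) n Is k -> (k <= n)%N) /\
  (forall (Is : nat -> {set 'I_d}) (k : nat),
      romp_run Phi (Phi *m v) n Is k ->
      is_residual Phi (Phi *m v) (Is k) 0 ->
      supp v \subset Is k /\ (#|Is k| <= 2 * n)%N).
Proof.
move=> n1 d1 Phi HR v sv.
move: HR; set eps := (3%:R / 100%:R) / _ => HR.
have [e0 e1] : 0 < eps /\ eps < 1 by case: HR => /andP[].
have [lam [L [lam0 L0 hL hLl hpar]]] := params n1 (erefl eps) e0.
set S := supp v.
have inv : forall Is k, romp_run Phi (Phi *m v) n Is k -> forall i, (i <= k)%N ->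
    (#|Is i :\: S| <= #|Is i :&: S|)%N /\ (i <= #|Is i :&: S|)%N.
  move=> Is k [I0 Hst]; elim=> [|i IH] ik.
    by rewrite I0 finset.set0D finset.set0I cards0.
  have [c1 c2] := IH (ltnW ik).
  have [J0 [-> J0I p1 p2]] := step_lemma HR lam0 L0 hL hLl hpar sv c1 (Hst i ik).
  rewrite -/S in p1 p2.
  rewrite finset.setIUl finset.setDUl.
  have d1' : (Is i :&: S) :&: (J0 :&: S) = finset.set0.
    apply/setP => j; rewrite !inE; apply/negbTE/negP => /and3P [/andP [jI _] jJ _].
    by have : j \in J0 :&: Is i; [rewrite inE jJ jI | rewrite J0I inE].
  have d2' : (Is i :\: S) :&: (J0 :\: S) = finset.set0.
    apply/setP => j; rewrite !inE; apply/negbTE/negP => /andP [/andP [_ jI] /andP [_ jJ]].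
    by have : j \in J0 :&: Is i; [rewrite inE jJ jI | rewrite J0I inE].
  have u1 := cardsUI (Is i :&: S) (J0 :&: S).
  have u2 := cardsUI (Is i :\: S) (J0 :\: S).
  rewrite d1' d2' cards0 !addn0 in u1 u2.
  rewrite u1 u2.
  move: c1 c2 p1 p2; clear; lia.
have cS : (#|S| <= n)%N := sv.
split.
  move=> Is k run.
  have [_ c2] := inv Is k run k (leqnn k).
  apply: leq_trans c2 _; apply: leq_trans cS.
  by apply: subset_leq_card; apply: subsetIr.
move=> Is k run [y [sy [e0' _]]].
have [c1 c2] := inv Is k run k (leqnn k).
set I := Is k in c1 c2 sy e0' *.
have cIS : (#|I :&: S| <= n)%N := leq_trans (subset_leq_card (subsetIr I S)) cS.
have cSI : (#|S :|: I| <= 2 * n)%N.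
  have e1' := cardsUI S I; have e2' := cardsID S I.
  rewrite (finset.setIC S I) in e1'; move: e1' e2' c1 cIS cS; clear; lia.
have sz : supp (v - y) \subset S :|: I :=
  fintype.subset_trans (suppB v y) (finset.setUSS (subxx _) sy).
have [Hlow _] := RIC_sq HR (leq_trans (subset_leq_card sz) cSI).
have z0 : Phi *m (v - y) = 0 by rewrite mulmxBr -e0'.
have sq0 : sq (Phi *m (v - y)) = 0 by rewrite z0 /sq big1 // => i _; rewrite mxE expr0n.
rewrite sq0 in Hlow.
have q0 : 0 < (1 - eps) ^+ 2 by rewrite exprn_gt0 // subr_gt0.
have hz : sq (v - y) = 0.
  apply/eqP; rewrite eq_le sq_ge0 andbT.
  by rewrite -(pmulr_rle0 _ q0).
have vy : v = y by apply/eqP; rewrite -subr_eq0; apply/eqP; apply: sq_eq0.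
split; first by rewrite /S vy.
have := cardsID S I; move: c1 cIS; clear; lia.
Qed.
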